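(* Let $G=(V,E)$ be a graph, $v\in V$, and $S_v$ the partial star product of $v$. (a) If $e=(v,u),f=(v,w)\in E_v$ satisfy $(e,f)\notin\mathfrak d_v^*$, then $e$ and $f$ span exactly one square in $G$, this square is chordless, and its top vertex $x$ is unique, i.e. $u$ and $w$ are the only common neighbours of $v$ and $x$ in $G$. (b) Conversely, if $x$ is a non-primal vertex of $S_v$, then there is exactly one chordless square in $S_v$ that contains $x$ and is spanned by two edges $e,f\in E_v$ with $(e,f)\notin\mathfrak d_v^*$.
   Context: All graphs are finite, simple and undirected. For a graph $G=(V,E)$ and $v\in V$, $E_v$ denotes the set of edges incident to $v$. For two distinct adjacent edges $e=(v,u)$, $f=(v,w)$, a square spanned by $e$ and $f$ is a $4$-cycle $v,u,x,w,v$ in $G$ with $x\notin\{v,u,w\}$; $x$ is its top vertex. The square is chordless if neither $(u,w)$ nor $(v,x)$ is an edge of $G$. In a chordless square $v,u,x,w$, the edge $(x,w)$ is the opposite edge of $(v,u)$ and $(x,u)$ is the opposite edge of $(v,w)$ (and vice versa). The relation $\delta(G)\subseteq E\times E$: $(e,f)\in\delta(G)$ iff (i) $e,f$ are distinct adjacent edges and it is not the case that $e$ and $f$ span exactly one square and that square is chordless; or (ii) $e$ and $f$ are opposite edges of a chordless square; or (iii) $e=f$. For a reflexive symmetric relation $R$, $R^*$ denotes its transitive closure (finest equivalence relation containing $R$). Define $\mathfrak d_v=((E_v\times E)\cup(E\times E_v))\cap\delta(G)$ and $\mathfrak d_v^*$ the finest equivalence relation on $E$ containing $\mathfrak d_v$.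 Let $F_v\subseteq E\setminus E_v$ be the set of edges that are the edges not incident to $v$ of some chordless square spanned by two edges $e,e'\in E_v$ with $(e,e')\notin\mathfrak d_v^*$. The partial star product (PSP) $S_v$ is the subgraph of $G$ with edge set $E_v\cup F_v$ and vertex set the set of endpoints of these edges; $v$ is its center, neighbours of $v$ are its primal vertices, and the remaining vertices of $S_v$ other than $v$ are non-primal vertices. *)

(* Defs.v *)
(* A finite simple graph is a symmetric irreflexive
   relation [adj : rel T] on a finType [T]; edges are the 2-element sets
   [set u; w] with [adj u w]. *)
From mathcomp Require Import all_boot.
Set Implicit Arguments.
Unset Strict Implicit.
Unset Printing Implicit Defensive.

Section PSP.
Variables (T : finType) (adj : rel T).

Definition edge (e : {set T}) : bool :=
  [exists u, exists w, adj u w && (e == [set u; w])].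

Definition incident (v : T) (e : {set T}) : bool := edge e && (v \in e).

(* v,u,x,w,v is a square (4-cycle) w.r.t. adjacency r, spanned by the
   distinct edges (v,u),(v,w); x is its top vertex *)
Definition square (r : rel T) (v u w x : T) : bool :=
  [&& r v u, r v w, u != w, r u x, r w x & x \notin [set v; u; w]].

Definition chordless (r : rel T) (v u w x : T) : bool :=
  ~~ r u w && ~~ r v x.

Definition delta1 (e f : {set T}) : bool :=
  [exists v, exists u, exists w,
    [&& e == [set v; u], f == [set v; w], adj v u, adj v w, u != w &
        ~~ ((#|[set x | square adj v u w x]| == 1) &&
            [forall x, square adj v u w x ==> chordless adj v u w x])]].

Definition delta2 (e f : {set T}) : bool :=
  [exists v, exists u, exists w, exists x,
    [&& square adj v u w x, chordless adj v u w x &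
        ((e == [set v; u]) && (f == [set x; w])) ||
        ((e == [set x; w]) && (f == [set v; u]))]].

Definition delta3 (e f : {set T}) : bool := edge e && (e == f).

Definition delta (e f : {set T}) : bool := [|| delta1 e f, delta2 e f | delta3 e f].

Definition dv (v : T) (e f : {set T}) : bool :=
  [&& incident v e || incident v f, edge e, edge f & delta e f].

(* d_v^* : finest equivalence relation containing d_v (reflexive-symmetric-
   transitive closure; on edges this is the equivalence closure on E) *)
Definition dvstar (v : T) (e f : {set T}) : bool :=
  connect (fun a b => dv v a b || dv v b a) e f.

Definition Fv (v : T) (g : {set T}) : bool :=
  [exists u, exists w, exists x,
    [&& square adj v u w x, chordless adj v u w x,
        ~~ dvstar v [set v; u] [set v; w] &
        (g == [set u; x]) || (g == [set w; x])]].

Definition SvE (v : T) (g : {set T}) : bool := incident v g || Fv v g.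

Definition adjS (v : T) : rel T := fun a b => (a != b) && SvE v [set a; b].

Definition inSv (v y : T) : bool := [exists g, SvE v g && (y \in g)].

Definition nonprimal (v y : T) : bool := [&& inSv v y, y != v & ~~ adj v y].

Definition psp_square (v x u w y : T) : Prop :=
  [/\ square (adjS v) v u w y, chordless (adjS v) v u w y,
      x \in [set v; u; w; y] &
      [/\ adj v u, adj v w & ~~ dvstar v [set v; u] [set v; w]]].

End PSP.

(* Main.v *)
Require Import Defs.
From mathcomp Require Import all_boot.
Set Implicit Arguments. Unset Strict Implicit. Unset Printing Implicit Defensive.
Section S.
Variables (T : finType) (adj : rel T).
Hypotheses (adj_sym : symmetric adj) (adj_irr : irreflexive adj).

Lemma sqP (r : rel T) v u w x : reflect
  ([/\ r v u, r v w, u != w, r u x & [/\ r w x, x != v, x != u & x != w]])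
  (square r v u w x).
Proof.
rewrite /square !inE !negb_or -!andbA.
apply: (iffP idP) => [/and5P [? ? ? ? /and4P [? ? ? ?]] | [-> -> -> -> [-> -> -> ->]]] //.
Qed.

Lemma set2_eq (a b c d : T) : [set a; b] = [set c; d] ->
  (a = c /\ b = d) \/ (a = d /\ b = c).
Proof.
move=> E.
have ha : a \in [set c; d] by rewrite -E set21.
have hb : b \in [set c; d] by rewrite -E set22.
have hc : c \in [set a; b] by rewrite E set21.
have hd : d \in [set a; b] by rewrite E set22.
move: ha hb hc hd => /set2P [] -> /set2P [] -> /set2P [] ? /set2P [] ?; subst; auto.
Qed.

Lemma edge2 a b : adj a b -> edge adj [set a; b].
Proof. by move=> h; apply/existsP; exists a; apply/existsP; exists b; rewrite h eqxx. Qed.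

Lemma edge_adj a b : edge adj [set a; b] -> a != b -> adj a b.
Proof.
move=> /existsP [u /existsP [w /andP [h /eqP E]]] nab.
case: (set2_eq E) => [[-> ->]|[-> ->]] //; by rewrite adj_sym.
Qed.

Definition Rv v := fun a b => dv adj v a b || dv adj v b a.
Lemma Rv_sym v : symmetric (Rv v).
Proof. by move=> a b; rewrite /Rv orbC. Qed.

Lemma dv1 v e f : dv adj v e f -> dvstar adj v e f.
Proof. by move=> h; apply: connect1; rewrite h. Qed.
Lemma dv1r v e f : dv adj v e f -> dvstar adj v f e.
Proof. by move=> h; apply: connect1; rewrite h orbT. Qed.
Lemma dvsT v : transitive (dvstar adj v).
Proof. exact: connect_trans. Qed.
Lemma dvsS v e f : dvstar adj v e f -> dvstar adj v f e.
Proof. by rewrite /dvstar (sym_connect_sym (Rv_sym v)). Qed.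

Lemma sq_swap (r : rel T) v u w x : square r v u w x -> square r v w u x.
Proof.
move/sqP => [? ? ? ? [? ? ? ?]]; apply/sqP; split => //; first by rewrite eq_sym.
Qed.
Lemma ch_swap v u w x : chordless adj v u w x -> chordless adj v w u x.
Proof. by rewrite /chordless adj_sym. Qed.

Lemma incid2 v u : adj v u -> incident adj v [set v; u].
Proof. by move=> h; rewrite /incident edge2 // set21. Qed.

Lemma d2 v u w x : square adj v u w x -> chordless adj v u w x ->
  dv adj v [set v; u] [set x; w].
Proof.
move=> sq ch; have := sq; move/sqP => [h1 h2 h3 h4 [h5 h6 h7 h8]].
apply/and4P; split; first by rewrite incid2.
- exact: edge2.
- by apply: edge2; rewrite adj_sym.
apply/orP; right; apply/orP; left.
apply/existsP; exists v; apply/existsP; exists u; apply/existsP; exists w.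
apply/existsP; exists x; by rewrite sq ch !eqxx.
Qed.

Lemma d1chord v u w x : square adj v u w x -> adj u w ->
  dv adj v [set v; u] [set v; w].
Proof.
move=> sq h; have := sq; move/sqP => [h1 h2 h3 h4 [h5 h6 h7 h8]].
apply/and4P; split; first by rewrite incid2.
- exact: edge2.
- exact: edge2.
apply/orP; left.
apply/existsP; exists v; apply/existsP; exists u; apply/existsP; exists w.
rewrite !eqxx h1 h2 h3 /= negb_and; apply/orP; right.
by apply/negP => /forallP /(_ x); rewrite sq /= /chordless h.
Qed.

Lemma kA v u w : adj v u -> adj v w -> ~~ dvstar adj v [set v; u] [set v; w] ->
  (u != w) /\ ((#|[set x | square adj v u w x]| == 1) &&
    [forall x, square adj v u w x ==> chordless adj v u w x]).
Proof.
move=> h1 h2 nd.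
have uw : u != w.
  by apply/negP => /eqP E; move: nd; rewrite E /dvstar connect0.
split => //; apply/negPn/negP => H; move/negP: nd; apply.
apply: dv1; apply/and4P; split; first by rewrite incid2.
- exact: edge2.
- exact: edge2.
apply/orP; left.
apply/existsP; exists v; apply/existsP; exists u; apply/existsP; exists w.
by rewrite !eqxx h1 h2 uw.
Qed.

Lemma Lvy v u w x y : square adj v u w x -> chordless adj v u w x ->
  adj v y -> adj x y -> y != u -> y != w -> dvstar adj v [set v; u] [set v; y].
Proof.
move=> sq ch hvy hxy yu yw; have := sq; move/sqP => [h1 h2 h3 h4 [h5 h6 h7 h8]].
have xy : x != y by apply/negP => /eqP E; move: hxy; rewrite E adj_irr.
have sq' : square adj v u y x.
  by apply/sqP; split => //; [rewrite eq_sym | rewrite adj_sym].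
case: (boolP (adj u y)) => huy; first by apply: dv1; exact: d1chord sq' huy.
have ch' : chordless adj v u y x by move: ch; rewrite /chordless huy => /andP [].  
have e1 := d2 sq' ch'.
have vx : v != x by rewrite eq_sym.
have sqy : forall t, adj v t -> adj x t -> t != y -> t != v -> t != x ->
    square adj y v x t.
  move=> t a b c d e; apply/sqP; split => //; rewrite adj_sym //.
have e2 : dv adj v [set y; v] [set y; x].
  apply/and4P; split.
  - by rewrite /incident set22 andbT edge2 // adj_sym.
  - by apply: edge2; rewrite adj_sym.
  - by apply: edge2; rewrite adj_sym.
  apply/orP; left.
  apply/existsP; exists y; apply/existsP; exists v; apply/existsP; exists x.
  rewrite !eqxx vx adj_sym hvy adj_sym hxy /= negb_and; apply/orP; left.
  apply/negP => /cards1P [t E].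
  have : u \in [set z | square adj y v x z].
    rewrite inE; apply: sqy => //; first by rewrite adj_sym.
    all: try by rewrite eq_sym.
    by apply/eqP => E'; move: h1; rewrite E' adj_irr.
  have : w \in [set z | square adj y v x z].
    rewrite inE; apply: sqy => //; first by rewrite adj_sym.
    all: try by rewrite eq_sym.
    by apply/eqP => E'; move: h2; rewrite E' adj_irr.
  by rewrite E => /set1P Ew /set1P Eu; move: h3; rewrite Ew Eu eqxx.
apply: (dvsT (dv1 e1)).
have -> : [set x; y] = [set y; x] by rewrite setUC.
have -> : [set v; y] = [set y; v] by rewrite setUC.
exact: dv1r e2.
Qed.

Lemma partA v u w : adj v u -> adj v w ->
     ~~ dvstar adj v [set v; u] [set v; w] ->
     exists x : T,
       [/\ square adj v u w x, chordless adj v u w x,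
           (forall x' : T, square adj v u w x' -> x' = x) &
           (forall y : T, adj v y -> adj x y -> y = u \/ y = w)].
Proof.
move=> h1 h2 nd; have [uw /andP [/cards1P [x E] /forallP F]] := kA h1 h2 nd.
have sq : square adj v u w x.
  have : x \in [set x] by rewrite set11.
  by rewrite -E inE.
have ch : chordless adj v u w x by have := F x; rewrite sq.
exists x; split => //.
  move=> x' sq'; have : x' \in [set x | square adj v u w x] by rewrite inE.
  by rewrite E => /set1P.
move=> y hvy hxy.
case: (eqVneq y u) => [->|yu]; first by left.
case: (eqVneq y w) => [->|yw]; first by right.
exfalso; move/negP: nd; apply.
have A1 := Lvy sq ch hvy hxy yu yw.
have A2 := Lvy (sq_swap sq) (ch_swap ch) hvy hxy yw yu.
exact: (dvsT A1 (dvsS A2)).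
Qed.

Lemma adjS_adj v a b : adjS adj v a b -> adj a b.
Proof.
case/andP => ab /orP [/andP [ed _]|]; first exact: edge_adj.
case/existsP => u /existsP [w /existsP [x /and4P [sq _ _ /orP [] /eqP E]]];
  move/sqP: sq => [h1 h2 h3 h4 [h5 h6 h7 h8]].
- by case: (set2_eq E) => [[-> ->]|[-> ->]] //; rewrite adj_sym.
- by case: (set2_eq E) => [[-> ->]|[-> ->]] //; rewrite adj_sym.
Qed.

Lemma Fv_end v g : Fv adj v g -> exists a b, [/\ g = [set a; b], adj v a,
  ~~ adj v b, b != v & a != v].
Proof.
case/existsP => u /existsP [w /existsP [x /and4P [sq ch _ /orP [] /eqP E]]];
  move/sqP: sq => [h1 h2 h3 h4 [h5 h6 h7 h8]]; case/andP: ch => _ nvx.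
- by exists u, x; split => //; apply/eqP => E'; move: h1; rewrite E' adj_irr.
- by exists w, x; split => //; apply/eqP => E'; move: h2; rewrite E' adj_irr.
Qed.

Lemma not_adjS_uw v u w : adj v u -> adj v w -> ~~ adjS adj v u w.
Proof.
move=> h1 h2; apply/negP => /andP [uw /orP [/andP [_]|/Fv_end [a [b [E _ nb _ _]]]]].
- by case/set2P => E; [move: h1|move: h2]; rewrite -E adj_irr.
- have : b \in [set u; w] by rewrite E set22.
  by case/set2P => E'; move: nb; rewrite E' ?h1 ?h2.
Qed.

Lemma not_adjS_vx v x : ~~ adj v x -> ~~ adjS adj v v x.
Proof.
move=> nx; apply/negP => /andP [vx /orP [/andP [ed _]|/Fv_end [a [b [E ha _ bv av]]]]].
- by move: nx; rewrite edge_adj.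
- have : v \in [set a; b] by rewrite -E set21.
  case/set2P => E'; first by move: ha; rewrite -E' adj_irr.
  by move: bv; rewrite E' eqxx.
Qed.

Lemma sq_adjS v u w x : square (adjS adj v) v u w x -> square adj v u w x.
Proof.
move/sqP => [h1 h2 h3 h4 [h5 h6 h7 h8]]; apply/sqP.
split; [exact: adjS_adj h1 | exact: adjS_adj h2 | done | exact: adjS_adj h4 | split => //; exact: adjS_adj h5].
Qed.

Lemma partB v x : nonprimal adj v x ->
     exists u w y : T,
       psp_square adj v x u w y /\
       (forall u' w' y' : T, psp_square adj v x u' w' y' ->
          [set u'; w'] = [set u; w] /\ y' = y).
Proof.
case/and3P => /existsP [g /andP [Sg xg]] xv nx.
case/orP: Sg => [/andP [ed vg]|].
  exfalso; case/existsP: ed => a /existsP [b /andP [hab /eqP E]].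
  move: vg xg; rewrite E => /set2P [] E1 /set2P [] E2; subst.
  - by move: xv; rewrite eqxx.
  - by move: nx; rewrite hab.
  - by move: nx; rewrite adj_sym hab.
  - by move: xv; rewrite eqxx.
case/existsP => u /existsP [w /existsP [x0 /and4P [sq ch nd gE]]].
have := sq; move/sqP => [h1 h2 h3 h4 [h5 h6 h7 h8]].
have xx0 : x = x0.
  case/orP: gE => /eqP E; move: xg; rewrite E => /set2P [] // E'; subst.
  - by move: nx; rewrite h1.
  - by move: nx; rewrite h2.
subst x0.
have uv : u != v by apply/eqP => E'; move: h1; rewrite E' adj_irr.
have wv : w != v by apply/eqP => E'; move: h2; rewrite E' adj_irr.
exists u, w, x; split.
  split => //; last by rewrite !inE eqxx !orbT.
  - apply/sqP; split => //.
    + by rewrite /adjS eq_sym uv /SvE incid2.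
    + by rewrite /adjS eq_sym wv /SvE incid2.
    + rewrite /adjS eq_sym h7 /SvE; apply/orP; right.
      apply/existsP; exists u; apply/existsP; exists w; apply/existsP; exists x.
      by rewrite sq ch nd eqxx.
    split => //.
    rewrite /adjS eq_sym h8 /SvE; apply/orP; right.
    apply/existsP; exists u; apply/existsP; exists w; apply/existsP; exists x.
    by rewrite sq ch nd eqxx orbT.
  by rewrite /chordless not_adjS_uw // not_adjS_vx.
move=> u' w' y' [sq' _ xin [h1' h2' nd']].
have sqa := sq_adjS sq'.
have xy' : x = y'.
  move: xin; rewrite !inE => /orP [/orP [/orP [] |] |] /eqP //.
  - by move=> E; move: xv; rewrite E eqxx.
  - by move=> E; move: nx; rewrite E h1'.
  - by move=> E; move: nx; rewrite E h2'.
subst y'.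
have [z [_ _ U Y]] := partA h1' h2' nd'.
have zx := U _ sqa; subst z.
split => //.
have uw' : u' != w' by move/sqP: sqa => [].
have h4s : adj x u by rewrite adj_sym.
have h5s : adj x w by rewrite adj_sym.
case: (Y u h1 h4s) => E1; case: (Y w h2 h5s) => E2; subst => //.
- by move: h3; rewrite eqxx.
- by rewrite setUC.
- by move: h3; rewrite eqxx.
Qed.
End S.
Unset Implicit Arguments.

Theorem lemma3p2 (T : finType) (adj : rel T)
    (adj_sym : symmetric adj) (adj_irr : irreflexive adj) (v : T) :
  (forall u w : T, adj v u -> adj v w ->
     ~~ dvstar adj v [set v; u] [set v; w] ->
     exists x : T,
       [/\ square adj v u w x, chordless adj v u w x,
           (forall x' : T, square adj v u w x' -> x' = x) &
           (forall y : T, adj v y -> adj x y -> y = u \/ y = w)])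
  /\
  (forall x : T, nonprimal adj v x ->
     exists u w y : T,
       psp_square adj v x u w y /\
       (forall u' w' y' : T, psp_square adj v x u' w' y' ->
          [set u'; w'] = [set u; w] /\ y' = y)).
Proof.
split; [exact: partA | exact: partB].
Qed.
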